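(* Let $d\ge2$, let $\mathcal{F}$ be a finite constraint family, and let $\phi$ be a $\mathrm{SAT}(\mathcal{F})$ formula on variables $x_1,\dots,x_n$. Let $F_d$ be the set of all assignments of weight at most $d$ that violate some constraint of $\phi$. Define $$\phi_d=\bigwedge_{a\in F_d}\mathrm{NAND}(\mathrm{ones}(a)),$$ where $\mathrm{NAND}(\mathrm{ones}(a))$ is the constraint that not all variables in $\mathrm{ones}(a)$ are $1$. Then the following hold. (P1) If $\mathcal{F}$ avoids $\mathrm{NAND}_{d+1}$, then every satisfying assignment of $\phi_d$ is a satisfying assignment of $\phi$. (P2) If $a$ is a $d$-robust satisfying assignment of $\phi$, then $a$ satisfies $\phi_d$.
   Context: A $\mathrm{SAT}(\mathcal{F})$ formula is a conjunction of constraints $f(x_{i_1},\dots,x_{i_r})$ with $f\in\mathcal{F}$ and $i_j\in[n]$ not necessarily distinct. For an assignment $a:[n]\to\{0,1\}$, its weight is $\sum_i a(i)$, and $\mathrm{ones}(a)=\{x_i: a(i)=1\}$. We write $a'\le a$ if $a'(i)\le a(i)$ for all $i$. A weight-$k$ assignment $a$ satisfying $\phi$ is $d$-robust if no assignment $a'\le a$ of weight at most $d$ violates $\phi$. $\mathrm{NAND}_{d+1}(y_1,\dots,y_{d+1})=\overline{y_1\wedge\cdots\wedge y_{d+1}}$. $\mathcal{F}$ avoids $\mathrm{NAND}_{d+1}$ if no $f\in\mathcal{F}$ has it as a restriction. A restriction of $f:\{0,1\}^r\to\{0,1\}$ is obtained by choosing pairwise disjoint, possibly empty, sets $X_1,\dots,X_s,Z_0,Z_1$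 with union $[r]$, and substituting the new argument $x_j$ at the positions in $X_j$, $0$ at the positions in $Z_0$, and $1$ at the positions in $Z_1$. *)

(* Defs.v *)
From Stdlib Require List.
From mathcomp Require Import all_boot.
Set Implicit Arguments. Unset Strict Implicit. Unset Printing Implicit Defensive.

Record constr := Constr { arity : nat; cfun : ('I_arity -> bool) -> bool }.

Definition cfamily := seq constr.

(* A constraint application f(x_{i_1},...,x_{i_r}) on variables x_0..x_{n-1};
   the indices need not be distinct. *)
Record capp (n : nat) := CApp { ccon : constr; cargs : 'I_(arity ccon) -> 'I_n }.

Definition formula n := seq (capp n).

Definition is_SAT_formula (F : cfamily) n (phi : formula n) : Prop :=
  forall C, List.In C phi -> List.In (ccon C) F.

Definition assignment n := 'I_n -> bool.

Definition sat_capp n (C : capp n) (a : assignment n) : bool :=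
  @cfun (ccon C) (fun p => a (@cargs n C p)).

Definition satisfies n (phi : formula n) (a : assignment n) : Prop :=
  forall C, List.In C phi -> sat_capp C a.

Definition violates n (phi : formula n) (a : assignment n) : Prop :=
  exists C, List.In C phi /\ ~~ sat_capp C a.

Definition weight n (a : assignment n) : nat := #|[set i | a i]|.
Definition ones n (a : assignment n) : {set 'I_n} := [set i | a i].
Definition le_assign n (a' a : assignment n) : Prop := forall i, a' i <= a i.

Definition robust n (phi : formula n) (d : nat) (a : assignment n) : Prop :=
  satisfies phi a /\
  forall a', le_assign a' a -> weight a' <= d -> ~ violates phi a'.

Definition NAND_set n (S : {set 'I_n}) (b : assignment n) : bool :=
  ~~ [forall i in S, b i].

Definition F_d n (phi : formula n) (d : nat) (a : assignment n) : Prop :=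
  weight a <= d /\ violates phi a.

Definition satisfies_phi_d n (phi : formula n) (d : nat) (b : assignment n) : Prop :=
  forall a, F_d phi d a -> NAND_set (ones a) b.

Definition NANDk (k : nat) (y : 'I_k -> bool) : bool := ~~ [forall j, y j].

(* g : ('I_s -> bool) -> bool is a restriction of f: each position of f gets
   a new variable x_j (positions in X_j), or the constant 0/1 (Z_0 / Z_1). *)
Definition is_restriction (f : constr) (s : nat) (g : ('I_s -> bool) -> bool) : Prop :=
  exists m : 'I_(arity f) -> 'I_s + bool,
    forall y : 'I_s -> bool,
      @cfun f (fun p => match m p with inl j => y j | inr c => c end) = g y.

Definition avoids_NAND (F : cfamily) (k : nat) : Prop :=
  forall f, List.In f F -> ~ is_restriction f (@NANDk k).

(* Main.v *)
From Stdlib Require Import FunctionalExtensionality.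
Require Import Defs.
From mathcomp Require Import all_boot.

Definition indT {n} (T : {set 'I_n}) : assignment n := fun i => i \in T.

Lemma P1 (d : nat) (F : cfamily) (n : nat) (phi : formula n) :
  is_SAT_formula F phi -> avoids_NAND F d.+1 ->
  forall b : assignment n, satisfies_phi_d phi d b -> satisfies phi b.
Proof.
move=> HF Hav b Hb C HC.
apply/negPn/negP => Hviol.
have Hs0 : ~~ sat_capp C (indT (ones b)).
  suff -> : indT (ones b) = b by [].
  by apply: functional_extensionality => i; rewrite /indT /ones inE.
case: (arg_minnP (fun T : {set 'I_n} => #|T|) (_ : (fun T : {set 'I_n} => (T \subset ones b) && ~~ sat_capp C (indT T)) (ones b))).
  by rewrite subxx.
move=> T /andP[Tsub Tviol] Tmin.
have Tbig : d < #|T|.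
  rewrite ltnNge; apply/negP => Tle.
  have Hw : weight (indT T) = #|T| by rewrite /weight; apply: eq_card => i; rewrite inE.
  have Hwd : weight (indT T) <= d by rewrite Hw.
  have := Hb (indT T) (conj Hwd  (ex_intro _ C (conj HC Tviol))).
  rewrite /NAND_set => /negP; apply; apply/forallP => i.
  apply/implyP; rewrite /ones inE => /(subsetP Tsub); by rewrite inE.
pose e := enum T.
have He : size e = #|T| by rewrite /e -cardE.
have Hu : uniq e by exact: enum_uniq.
pose h (i : 'I_n) : 'I_d.+1 := inord (minn (index i e) d).
apply: (Hav (ccon C) (HF C HC)).
exists (fun p => if @cargs n C p \in T then inl (h (@cargs n C p)) else inr false).
move=> y.
pose T' := [set i in T | y (h i)].
have -> : (fun p => match (if @cargs n C p \in T then inl (h (@cargs n C p)) else inr false) with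
           | inl j => y j | inr c => c end) = (fun p => indT T' (@cargs n C p)).
  apply functional_extensionality => p; rewrite /indT /T' inE.
  by case: (@cargs n C p \in T).
rewrite /NANDk.
case: (boolP [forall j, y j]) => Hall.
  apply/negbTE; suff -> : T' = T by [].
  apply/setP => i; rewrite /T' inE; case: (i \in T) => //=.
  exact: (forallP Hall).
case/forallPn: Hall => j Hj.
have T0 : 0 < #|T| by apply: leq_ltn_trans Tbig.
have [x0 _] : exists x0 : 'I_n, true.
  by move: T0; rewrite card_gt0 => /set0Pn [x _]; exists x.
pose x := nth x0 e j.
have jlt : (j < size e)%N by rewrite He; apply: leq_ltn_trans Tbig; rewrite -ltnS.
have xT : x \in T by rewrite -mem_enum mem_nth.
have xT' : x \notin T'.
  rewrite /T' inE xT /= /h /x index_uniq //.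
  have -> : minn j d = j by apply/minn_idPl; rewrite -ltnS.
  by rewrite inord_val.
have Tp : T' \proper T.
  rewrite properEneq; apply/andP; split.
    by apply/negP => /eqP E; move: xT'; rewrite E xT.
  by apply/subsetP => i; rewrite /T' inE => /andP[].
apply/negbNE/negP => Hv.
have := Tmin T'.
rewrite (subset_trans (proper_sub Tp) Tsub) Hv /= => /(_ isT).
by rewrite leqNgt proper_card.
Qed.

Lemma P2 (d : nat) (n : nat) (phi : formula n) :
  forall a : assignment n, robust phi d a -> satisfies_phi_d phi d a.
Proof.
move=> a [_ Hr] a' [Hw Hv].
rewrite /NAND_set; apply/negP => /forallP Hall.
apply: (Hr a' _ Hw Hv) => i.
have := Hall i; rewrite /ones inE; by case: (a' i); case: (a i).
Qed.

Theorem mainTheorem7 (d : nat) (F : cfamily) (n : nat) (phi : formula n) :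
  2 <= d -> is_SAT_formula F phi ->
  (avoids_NAND F d.+1 ->
     forall b : assignment n, satisfies_phi_d phi d b -> satisfies phi b) /\
  (forall a : assignment n, robust phi d a -> satisfies_phi_d phi d a).
Proof.
move=> _ HF; split; [exact: P1 | exact: P2].
Qed.
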